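(* Let $\mathcal{U}=\{u_1,\ldots,u_M\}\subset\mathbb{R}\setminus\{0\}$, $u_{\min}=\min_m|u_m|$, $u_{\max}=\max_m|u_m|$, $\sigma^2>0$, $N>k\ge1$, and $\sigma_{N/k}^2=\sigma^2/\log(N/k)$. Let $h(\omega)=\sum_{m=1}^M\exp\big(\frac{|u_m|u_{\max}}{\sigma_{N/k}^2}-\frac{u_m^2}{2\sigma_{N/k}^2}+\frac{u_m\omega}{\sigma_{N/k}^2}\big)$. For $\omega\sim\mathcal{N}(0,\sigma_{N/k}^2)$, $$\mathbb{P}(h(\omega)\le1)\le(N/k)^{-C_{1,2}},\qquad C_{1,2}=\frac{(u_{\max}-u_{\min}/2)^2}{2\sigma^2}.$$ *)

(* Defs.v *)
From HB Require Import structures.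
From mathcomp Require Import all_boot all_order all_algebra.
From mathcomp Require Import all_classical all_reals all_analysis.
From mathcomp Require Import normal_distribution.
Set Implicit Arguments. Unset Strict Implicit. Unset Printing Implicit Defensive.
Import Order.TTheory GRing.Theory Num.Theory.
Local Open Scope ring_scope.

(* u_max = max_m |u_m| (the |u_m| are >= 0, so 0 is a neutral start) *)
Definition umax {R : realType} (M : nat) (u : 'I_M -> R) : R :=
  \big[Num.max/0]_(m < M) `|u m|.

(* u_min = min_m |u_m| (starting from u_max, which is >= every |u_m|) *)
Definition umin {R : realType} (M : nat) (u : 'I_M -> R) : R :=
  \big[Num.min/umax u]_(m < M) `|u m|.

Definition sigmaNk2 {R : realType} (sigma2 : R) (N k : nat) : R :=
  sigma2 / ln (N%:R / k%:R).

Definition hfun {R : realType} (M : nat) (u : 'I_M -> R) (sigma2 : R) (N k : nat)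
  (w : R) : R :=
  \sum_(m < M) expR (`|u m| * umax u / sigmaNk2 sigma2 N k
                     - u m ^+ 2 / (2 * sigmaNk2 sigma2 N k)
                     + u m * w / sigmaNk2 sigma2 N k).

Definition C12 {R : realType} (M : nat) (u : 'I_M -> R) (sigma2 : R) : R :=
  (umax u - umin u / 2) ^+ 2 / (2 * sigma2).

(* Main.v *)
Require Import Defs.
From HB Require Import structures.
From mathcomp Require Import all_boot all_order all_algebra.
From mathcomp Require Import all_classical all_reals all_analysis.
From mathcomp Require Import normal_distribution.
From mathcomp Require Import ring lra measurable_realfun.
Import Order.TTheory GRing.Theory Num.Theory.
Local Open Scope classical_set_scope.
Local Open Scope ring_scope.

Lemma pdf_shift (R : realType) (sig c x : R) : sig != 0 -> c ^+ 2 <= c * x ->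
  normal_pdf 0 sig x <= expR (- c ^+ 2 / (sig ^+ 2 *+ 2)) * normal_pdf c sig x.
Proof.
move=> s0 hc; rewrite /normal_pdf (negbTE s0) /= /normal_fun subr0.
rewrite mulrCA ler_pM2l; last by rewrite normal_peak_gt0.
rewrite -expRD ler_expR.
have hp : 0 < (sig ^+ 2 *+ 2)^-1.
  by rewrite invr_gt0 pmulrn_lgt0 // exprn_even_gt0.
set t := (sig ^+ 2 *+ 2)^-1 in hp *.
rewrite -subr_ge0.
have -> : - c ^+ 2 * t + - (x - c) ^+ 2 * t - - x ^+ 2 * t = (c * x - c ^+ 2) * 2 * t
  by ring.
by apply: mulr_ge0; [apply: mulr_ge0; [rewrite subr_ge0 | ] | exact: ltW].
Qed.

Theorem lemma6 (R : realType) (M : nat) (u : 'I_M -> R) (sigma2 : R) (N k : nat) :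
  (0 < M)%N -> injective u -> (forall m, u m != 0) ->
  0 < sigma2 -> (1 <= k)%N -> (k < N)%N ->
  (normal_prob 0 (Num.sqrt (sigmaNk2 sigma2 N k))
     [set w : R | (hfun u sigma2 N k w <= 1)%R]
   <= ((N%:R / k%:R) `^ (- C12 u sigma2))%:E)%E.
Proof.
move=> M0 _ u0 s2 k1 kN.
have Nk1 : 1 < N%:R / k%:R :> R.
  rewrite ltr_pdivlMr ?ltr0n // mul1r ltr_nat //.
have L0 : 0 < ln (N%:R / k%:R : R) by rewrite ln_gt0.
set L := ln _ in L0.
have s0 : 0 < sigmaNk2 sigma2 N k by rewrite /sigmaNk2 divr_gt0.
set s := sigmaNk2 _ _ _ in s0 *.
set sig := Num.sqrt s.
have sig2 : sig ^+ 2 = s by rewrite sqr_sqrtr // ltW.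
have sig0 : sig != 0 by rewrite sqrtr_eq0 -ltNge.
have [m0 _ hm0] := @eq_bigmin _ _ _ (umax u) (Ordinal M0) xpredT (fun m => `|u m|)
   isT (fun i _ => le_bigmax _ _ i).
have hmin : umin u = `|u m0| by rewrite /umin hm0.
set U := umax u.
have hU : `|u m0| <= U by exact: le_bigmax.
set a := U - `|u m0| / 2.
set c := if 0 < u m0 then - a else a.
have c2 : c ^+ 2 = a ^+ 2 by rewrite /c; case: ifP => _ //; rewrite sqrrN.
have a0 : 0 <= a by rewrite /a; have := normr_ge0 (u m0); lra.
have um0 : 0 < `|u m0| by rewrite normr_gt0.
have hA : forall x, hfun u sigma2 N k x <= 1 -> c ^+ 2 <= c * x.
  move=> x hx.
  have : expR (`|u m0| * U / s - u m0 ^+ 2 / (2 * s) + u m0 * x / s) <= 1.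
    apply: le_trans hx; rewrite /hfun -/s (bigD1 m0) //= lerDl.
    by apply: sumr_ge0 => i _; exact: expR_ge0.
  rewrite -[X in _ <= X]expR0 ler_expR => he.
  have key : `|u m0| * (U - `|u m0| / 2 + (u m0 / `|u m0|) * x) <= 0.
    have -> : `|u m0| * (U - `|u m0| / 2 + (u m0 / `|u m0|) * x) =
      (`|u m0| * U / s - u m0 ^+ 2 / (2 * s) + u m0 * x / s) * s.
      rewrite -[u m0 ^+ 2](real_normK (num_real (u m0))).
      by field; rewrite (gt_eqF s0) (gt_eqF um0).
    exact: mulr_le0_ge0 he (ltW s0).
  rewrite pmulr_rle0 // in key.
  rewrite /c; case: ifP => hpos.
    have e1 : u m0 / `|u m0| = 1 by rewrite gtr0_norm // divff // gt_eqF.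
    rewrite e1 mul1r in key.
    have k2 : a + x <= 0 by rewrite /a.
    nra.
  have hneg : u m0 < 0 by rewrite lt_neqAle u0 /= leNgt hpos.
  have e1 : u m0 / `|u m0| = -1 by rewrite ltr0_norm // divrN divff // lt_eqF.
  rewrite e1 mulN1r in key.
  have k2 : a - x <= 0 by rewrite /a.
  nra.
have mA : measurable [set w : R | hfun u sigma2 N k w <= 1].
  have mh : measurable_fun setT (hfun u sigma2 N k).
    rewrite /hfun; apply: measurable_sum => i.
    apply: measurableT_comp; first exact: measurable_expR.
    apply: measurable_funD => //; apply: measurable_funM => //.
  have -> : [set w : R | hfun u sigma2 N k w <= 1] =
            setT `&` hfun u sigma2 N k @^-1` `]-oo, 1]%classic.
    by apply/seteqP; split=> x /=; rewrite ?in_itv /= ?set_itvE /= ?inE /= ?in_itv; move=> /= h; rewrite ?in_itv /=; [split|]; move: h => /=; rewrite ?in_itv /= ?inE; try done; case.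
  exact: mh measurableT _ (measurable_itv _).
set A := [set w : R | _] in mA *.
set K := expR (- c ^+ 2 / (sig ^+ 2 *+ 2)).
have mpdf : forall D, measurable_fun D (fun x => (normal_pdf c sig x)%:E).
  by move=> D; apply/measurable_EFinP/measurable_funTS; exact: measurable_normal_pdf.
rewrite /normal_prob.
apply: (@le_trans _ _ (\int[lebesgue_measure]_(x in A) (K%:E * (normal_pdf c sig x)%:E))%E).
  apply: ge0_le_integral => //.
  - by move=> x _; rewrite lee_fin normal_pdf_ge0.
  - by apply/measurable_EFinP/measurable_funTS; exact: measurable_normal_pdf.
  - by apply: emeasurable_funM => //; apply/measurable_EFinP/measurable_funTS; exact: measurable_normal_pdf.
  - by move=> x Ax; rewrite -EFinM lee_fin; apply: pdf_shift => //; exact: hA.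
apply: (@le_trans _ _ (\int[lebesgue_measure]_(x in setT) (K%:E * (normal_pdf c sig x)%:E))%E).
  apply: ge0_subset_integral => //.
  - by apply: emeasurable_funM => //; apply/measurable_EFinP/measurable_funTS; exact: measurable_normal_pdf.
  - by move=> x _; rewrite -EFinM lee_fin mulr_ge0 // ?expR_ge0 // normal_pdf_ge0.
rewrite ge0_integralZl_EFin //; last exact: expR_ge0.
  2: by move=> x _; rewrite lee_fin normal_pdf_ge0.
rewrite integral_normal_pdf mule1 lee_fin /K /powR gt_eqF; last first.
  exact: lt_trans ltr01 Nk1.
rewrite ler_expR c2 sig2 /C12 hmin -/U -/a -/L.
rewrite le_eqVlt; apply/orP; left; apply/eqP.
rewrite /s /sigmaNk2 -/L; field.
by rewrite (gt_eqF s2) (gt_eqF L0).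
exact: mpdf.
Qed.
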